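(* Let $\mu:R\to S$ be a crossed module of racks. Then the induced group homomorphism ${\rm As}(\mu):{\rm As}(R)\to{\rm As}(S)$, together with the action of ${\rm As}(S)$ on ${\rm As}(R)$ by group automorphisms extending the given rack action of $S$ on $R$ (i.e. $i_R(r)\cdot i_S(s)=i_R(r\cdot s)$), is a crossed module of groups. In other words, the functor ${\rm As}$ sends crossed modules of racks to crossed modules of groups.
   Context: A (right) rack is a set with a binary operation $\lhd$ such that each $x\mapsto x\lhd y$ is bijective and $(x\lhd y)\lhd z=(x\lhd z)\lhd(y\lhd z)$. An action of a rack $R$ on a set $X$ is a family of bijections $x\mapsto x\cdot r$ ($r\in R$) with $(x\cdot r)\cdot r'=(x\cdot r')\cdot(r\lhd r')$; if $X$ is a rack, it is by automorphisms if also $(x\lhd x')\cdot r=(x\cdot r)\lhd(x'\cdot r)$. A crossed module of racks is a rack morphism $\mu:R\to S$ with an action of $S$ on $R$ by automorphisms such that $\mu(r\cdot s)=\mu(r)\lhd s$ and $r\cdot\mu(r')=r\lhd r'$ for all $r,r'\in R$, $s\in S$. For a rack $R$, the associated group ${\rm As}(R)$ is the quotient of the free group on the set $R$ by the normal subgroup generated by the elements $y^{-1}x^{-1}y(x\lhd y)$, $x,y\in R$, and $i_R:R\to{\rm As}(R)$ is the canonical map; a rack morphism $\mu:R\to S$ induces a group homomorphism ${\rm As}(\mu)$ with ${\rm As}(\mu)\circ i_R=i_S\circ\mu$. For a group $G$, the conjugation rack has $g\lhd h=h^{-1}gh$. A crossed module of groups is a group homomorphism $\mu:M\to N$ together with a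 right action of $N$ on $M$ by group automorphisms such that $\mu(m\cdot n)=n^{-1}\mu(m)n$ and $m\cdot\mu(m')=(m')^{-1}mm'$ for all $m,m'\in M$, $n\in N$. *)

(* Defs.v *)
From mathcomp Require Import all_boot.
Set Implicit Arguments. Unset Strict Implicit. Unset Printing Implicit Defensive.

Definition is_rack (R : Type) (op : R -> R -> R) : Prop :=
  (forall y, bijective (fun x => op x y)) /\
  (forall x y z, op (op x y) z = op (op x z) (op y z)).

Definition rack_morphism (R S : Type) (opR : R -> R -> R) (opS : S -> S -> S)
  (f : R -> S) : Prop := forall x y, f (opR x y) = opS (f x) (f y).

Definition rack_action (R X : Type) (opR : R -> R -> R) (act : X -> R -> X) : Prop :=
  (forall r, bijective (fun x => act x r)) /\
  (forall x r r', act (act x r) r' = act (act x r') (opR r r')).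

Definition rack_action_by_aut (R X : Type) (opR : R -> R -> R) (opX : X -> X -> X)
  (act : X -> R -> X) : Prop :=
  rack_action opR act /\ forall x x' r, act (opX x x') r = opX (act x r) (act x' r).

Definition rack_crossed_module (R S : Type) (opR : R -> R -> R) (opS : S -> S -> S)
  (mu : R -> S) (act : R -> S -> R) : Prop :=
  is_rack opR /\ is_rack opS /\ rack_morphism opR opS mu /\
  rack_action_by_aut opS opR act /\
  (forall r s, mu (act r s) = opS (mu r) s) /\
  (forall r r', act r (mu r') = opR r r').

(* A letter (false, x) stands for the generator x, (true, x) for x^{-1}. *)
Definition word (R : Type) := seq (bool * R).

Definition gen (R : Type) (x : R) : word R := [:: (false, x)].
Definition w_inv (R : Type) (w : word R) : word R :=
  rev (map (fun l => (~~ l.1, l.2)) w).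

(* As_eq op u v : u and v represent the same element of As(R), i.e. the
   congruence on the free monoid generated by free cancellation and by the
   relators y^{-1} x^{-1} y (x <| y); the quotient is the free group on R
   modulo the normal subgroup generated by these relators. *)
Inductive As_eq (R : Type) (op : R -> R -> R) : word R -> word R -> Prop :=
| As_cancel1 u v x : As_eq op (u ++ [:: (false, x); (true, x)] ++ v) (u ++ v)
| As_cancel2 u v x : As_eq op (u ++ [:: (true, x); (false, x)] ++ v) (u ++ v)
| As_rel u v x y :
    As_eq op (u ++ [:: (true, y); (true, x); (false, y); (false, op x y)] ++ v) (u ++ v)
| As_refl u : As_eq op u u
| As_sym u v : As_eq op u v -> As_eq op v u
| As_trans u v w : As_eq op u v -> As_eq op v w -> As_eq op u w.

Definition As_map (R S : Type) (mu : R -> S) (w : word R) : word S :=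
  map (fun l => (l.1, mu l.2)) w.

(* Crossed module of groups mu : M -> N with M = As(R), N = As(S) (group law =
   concatenation, unit = [::], inverse = w_inv, equality = As_eq), where the
   homomorphism is As(mu) and alpha : M -> N -> M is the right action. *)
Definition As_group_crossed_module (R S : Type) (opR : R -> R -> R) (opS : S -> S -> S)
  (mu : R -> S) (alpha : word R -> word S -> word R) : Prop :=
      (forall m m', As_eq opR m m' -> As_eq opS (As_map mu m) (As_map mu m')) /\
      (forall m m' n n', As_eq opR m m' -> As_eq opS n n' ->
          As_eq opR (alpha m n) (alpha m' n')) /\
      (forall m, As_eq opR (alpha m [::]) m) /\
      (forall m n n', As_eq opR (alpha m (n ++ n')) (alpha (alpha m n) n')) /\
      (* by group automorphisms (endomorphisms; invertibility follows) *)
      (forall m m' n, As_eq opR (alpha (m ++ m') n) (alpha m n ++ alpha m' n)) /\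
      (forall m n, As_eq opS (As_map mu (alpha m n)) (w_inv n ++ As_map mu m ++ n)) /\
      (forall m m', As_eq opR (alpha m (As_map mu m')) (w_inv m' ++ m ++ m')).

(* Main.v *)
Require Import Defs.
From mathcomp Require Import all_boot.
From Stdlib Require Import ClassicalEpsilon.
Set Implicit Arguments. Unset Strict Implicit. Unset Printing Implicit Defensive.

Definition linv (T : Type) (l : bool * T) := (~~ l.1, l.2).

Lemma As_ctx T op (a b u v : word T) :
  As_eq op u v -> As_eq op (a ++ u ++ b) (a ++ v ++ b).
Proof.
have E : forall (u c v : word T), a ++ (u ++ c ++ v) ++ b = (a ++ u) ++ c ++ (v ++ b).
  by move=> u0 c v0; rewrite !catA.
have E0 : forall (u v : word T), a ++ (u ++ v) ++ b = (a ++ u) ++ (v ++ b).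
  by move=> u0 v0; rewrite !catA.
elim => {u v} [u v x|u v x|u v x y|u|u v _ IH|u v w _ IH1 _ IH2].
- rewrite E E0; exact: As_cancel1.
- rewrite E E0; exact: As_cancel2.
- rewrite E E0; exact: As_rel.
- exact: As_refl.
- exact: As_sym.
- exact: As_trans IH2.
Qed.

Arguments As_ctx {T} op a b {u v}.

Lemma As_cat T op (u u' v v' : word T) :
  As_eq op u u' -> As_eq op v v' -> As_eq op (u ++ v) (u' ++ v').
Proof.
move=> H1 H2; apply: (As_trans (v := u' ++ v)).
  by have := As_ctx op [::] v H1.
have := As_ctx op u' [::] H2; by rewrite !cats0.
Qed.

Lemma cancel_l T op (l : bool * T) : As_eq op [:: l; linv l] [::].
Proof. case: l => [[] x]; [exact: (As_cancel2 op [::] [::] x)|exact: (As_cancel1 op [::] [::] x)]. Qed.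

Arguments cancel_l {T} op l.

Lemma w_inv_cons T (l : bool * T) w : w_inv (l :: w) = w_inv w ++ [:: linv l].
Proof. by rewrite /w_inv /= rev_cons cats1. Qed.

Lemma w_inv_cat T (u v : word T) : w_inv (u ++ v) = w_inv v ++ w_inv u.
Proof. by rewrite /w_inv map_cat rev_cat. Qed.

Lemma inv_r T op (w : word T) : As_eq op (w ++ w_inv w) [::].
Proof.
elim: w => [|l w IH] /=; first exact: As_refl.
rewrite w_inv_cons.
apply: As_trans (cancel_l op l).
have := As_ctx op [:: l] [:: linv l] IH; by rewrite /= -!catA.
Qed.

Arguments inv_r {T} op w.

Lemma inv_l T op (w : word T) : As_eq op (w_inv w ++ w) [::].
Proof.
elim: w => [|l w IH] /=; first exact: As_refl.
rewrite w_inv_cons -catA.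
apply: As_trans IH.
have := As_ctx op (w_inv w) w (cancel_l op (linv l)).
by rewrite /linv /= negbK; case: l.
Qed.

Arguments inv_l {T} op w.

Lemma solve_r T op (u v : word T) : As_eq op (u ++ v) [::] -> As_eq op v (w_inv u).
Proof.
move=> H; apply: (As_trans (v := (w_inv u ++ u) ++ v)).
  apply: As_sym; have := As_cat (inv_l op u) (As_refl op v); done.
rewrite -catA; have := As_cat (As_refl op (w_inv u)) H; by rewrite cats0.
Qed.

Lemma inv_cong T op (u v : word T) : As_eq op u v -> As_eq op (w_inv u) (w_inv v).
Proof.
move=> H.
apply: (As_trans (v := w_inv u ++ (v ++ w_inv v))).
  apply: As_sym; have := As_cat (As_refl op (w_inv u)) (inv_r op v); by rewrite cats0.
apply: (As_trans (v := w_inv u ++ (u ++ w_inv v))).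
  apply: As_cat; first exact: As_refl.
  apply: As_cat; [exact: As_sym|exact: As_refl].
rewrite catA; have := As_cat (inv_l op u) (As_refl op (w_inv v)); done.
Qed.

Lemma conj1 T op (x y : T) :
  As_eq op [:: (false, op x y)] [:: (true, y); (false, x); (false, y)].
Proof.
have H : As_eq op ([:: (true, y); (true, x); (false, y)] ++ [:: (false, op x y)]) [::].
  exact: (As_rel op [::] [::] x y).
exact: (solve_r H).
Qed.

Arguments conj1 {T} op x y.

Lemma conj T op (b : bool) (x y : T) :
  As_eq op [:: (b, op x y)] [:: (true, y); (b, x); (false, y)].
Proof.
case: b; last exact: conj1.
have := inv_cong (conj1 op x y); done.
Qed.

Arguments conj {T} op b x y.

Lemma conj_map T op (U : Type) (F G : U -> T) (c : bool) (y : T) (m : seq (bool * U)) :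
  (forall t, if c then op (G t) y = F t else G t = op (F t) y) ->
  As_eq op (map (fun a => (a.1, G a.2)) m)
    (w_inv [:: (c, y)] ++ map (fun a => (a.1, F a.2)) m ++ [:: (c, y)]).
Proof.
move=> HFG; elim: m => [|[b t] m IH] /=.
  apply: As_sym; have := cancel_l op (~~ c, y); by rewrite /linv /= negbK.
have L : As_eq op [:: (b, G t); (~~ c, y)] [:: (~~ c, y); (b, F t)].
  move: (HFG t); clear IH HFG; case: c => /= Ht.
  - rewrite -Ht; apply: As_sym.
    apply: (As_trans (v := [:: (false, y)] ++ [:: (true, y); (b, G t); (false, y)])).
      exact: (As_cat (As_refl op [:: (false, y)]) (conj op b (G t) y)).
    have := As_ctx op [::] [:: (b, G t); (false, y)] (cancel_l op (false, y)); done.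
  - rewrite Ht.
    apply: (As_trans (v := [:: (true, y); (b, F t); (false, y)] ++ [:: (true, y)])).
      exact: (As_cat (conj op b (F t) y) (As_refl op [:: (true, y)])).
    have := As_ctx op [:: (true, y); (b, F t)] [::] (cancel_l op (false, y)).
    by rewrite cats0.
apply: (As_trans (v := [:: (b, G t)] ++ ([:: (~~ c, y)] ++
   map (fun a => (a.1, F a.2)) m ++ [:: (c, y)]))).
  exact: (As_cat (As_refl op [:: (b, G t)]) IH).
rewrite catA; have := As_cat L (As_refl op (map (fun a => (a.1, F a.2)) m ++ [:: (c, y)])).
done.
Qed.

Lemma inv_exists (X Y : Type) (f : X -> Y -> X) :
  (forall y, bijective (f^~ y)) ->
  exists g : X -> Y -> X, forall y, cancel (f^~ y) (g^~ y) /\ cancel (g^~ y) (f^~ y).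
Proof.
move=> H.
have H' : forall y, {g : X -> X | cancel (f^~ y) g /\ cancel g (f^~ y)}.
  move=> y; apply: constructive_indefinite_description.
  by case: (H y) => g h1 h2; exists g.
by exists (fun x y => sval (H' y) x) => y; exact: (svalP (H' y)).
Qed.

Theorem mainTheorem2 (R S : Type) (opR : R -> R -> R) (opS : S -> S -> S)
  (mu : R -> S) (act : R -> S -> R) :
  rack_crossed_module opR opS mu act ->
  exists alpha : word R -> word S -> word R,
    As_group_crossed_module opR opS mu alpha /\
    (* alpha extends the rack action: i_R(r) . i_S(s) = i_R(r . s) *)
    (forall r s, As_eq opR (alpha (gen r) (gen s)) (gen (act r s))).
Proof.
move=> [_ [_ [Hmu [[[Hbij Hax] Haut] [Hmuact Hactmu]]]]].
have [inv Hinv] := inv_exists Hbij.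
have K1 : forall r s, inv (act r s) s = r by move=> r s; exact: (Hinv s).1.
have K2 : forall r s, act (inv r s) s = r by move=> r s; exact: (Hinv s).2.
pose al r (l : bool * S) := if l.1 then inv r l.2 else act r l.2.
pose aw r n := foldl al r n.
pose alpha (m : word R) n := map (fun a => (a.1, aw a.2 n)) m.
have awE : forall n n', As_eq opS n n' -> forall r, aw r n = aw r n'.
  move=> n n'; elim => {n n'} [u v x|u v x|u v x y|u|u v _ IH|u v w _ IH1 _ IH2] r.
  - by rewrite /aw !foldl_cat /= /al /= K1.
  - by rewrite /aw !foldl_cat /= /al /= K2.
  - rewrite /aw !foldl_cat /= /al /= -Hax K2 K2 //.
  - by [].
  - by rewrite IH.
  - by rewrite IH1 IH2.
have awop : forall n x y, aw (opR x y) n = opR (aw x n) (aw y n).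
  elim => [|[b s] n IH] x y //=.
  rewrite /aw /= -/(aw _ n) -/(aw _ n) -/(aw _ n) -IH; congr (aw _ n).
  rewrite /al /=; case: b => //=.
  by rewrite -{1}(K2 x s) -{1}(K2 y s) -Haut K1.
have alphaR : forall m m' n, As_eq opR m m' -> As_eq opR (alpha m n) (alpha m' n).
  move=> m m' n; elim => {m m'} [u v x|u v x|u v x y|u|u v _ IH|u v w _ IH1 _ IH2].
  - rewrite /alpha !map_cat /=; exact: As_cancel1.
  - rewrite /alpha !map_cat /=; exact: As_cancel2.
  - rewrite /alpha !map_cat /= awop; exact: As_rel.
  - exact: As_refl.
  - exact: As_sym.
  - exact: As_trans IH2.
have alpha_cons : forall m l n, alpha m (l :: n) = alpha (alpha m [:: l]) n.
  by move=> m l n; rewrite /alpha -map_comp.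
have map_id' : forall (T : Type) (m : word T), map (fun a => (a.1, a.2)) m = m.
  by move=> T m; elim: m => [|[] ] //= ? ? ? ->.
exists alpha; split; last by move=> r s; exact: As_refl.
split.
  move=> m m'; elim => {m m'} [u v x|u v x|u v x y|u|u v _ IH|u v w _ IH1 _ IH2].
  - rewrite /As_map !map_cat /=; exact: As_cancel1.
  - rewrite /As_map !map_cat /=; exact: As_cancel2.
  - rewrite /As_map !map_cat /= Hmu; exact: As_rel.
  - exact: As_refl.
  - exact: As_sym.
  - exact: As_trans IH2.
split.
  move=> m m' n n' Hm Hn; apply: As_trans (alphaR _ _ n Hm) _.
  have -> : alpha m' n = alpha m' n'.
    by apply: eq_map => a; rewrite (awE _ _ Hn).
  exact: As_refl.
split.
  move=> m; rewrite /alpha /= map_id'; exact: As_refl.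
split.
  move=> m n n'; have -> : alpha m (n ++ n') = alpha (alpha m n) n'.
    by rewrite /alpha -map_comp; apply: eq_map => a /=; rewrite /aw foldl_cat.
  exact: As_refl.
split.
  move=> m m' n; rewrite /alpha map_cat; exact: As_refl.
split.
  move=> m n; elim: n m => [|l n IH] m.
    rewrite /= /alpha map_id' cats0; exact: As_refl.
  rewrite alpha_cons; apply: As_trans (IH _) _.
  rewrite w_inv_cons -!catA.
  apply: As_cat; first exact: As_refl.
  rewrite (_ : l :: n = [:: l] ++ n) // !catA.
  apply: As_cat; last exact: As_refl.
  rewrite -catA.
  case: l => c s.
  rewrite /As_map /alpha -map_comp.
  apply: (@conj_map S opS R mu (fun r => mu (aw r [:: (c, s)])) c s m) => t; rewrite /aw /= /al /=; case: c => /=.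
    by rewrite -Hmuact K2.
  by rewrite Hmuact.
move=> m m'; elim: m' m => [|l m' IH] m.
  rewrite /= /alpha map_id' cats0; exact: As_refl.
rewrite /As_map /= -/(As_map mu m') alpha_cons; apply: As_trans (IH _) _.
rewrite w_inv_cons -!catA.
apply: As_cat; first exact: As_refl.
rewrite (_ : l :: m' = [:: l] ++ m') // !catA.
apply: As_cat; last exact: As_refl.
rewrite -catA.
case: l => c r'.
have := @conj_map R opR R id (fun r => aw r [:: (c, mu r')]) c r' m.
rewrite map_id'; apply => t; rewrite /aw /= /al /=; case: c => /=.
  by rewrite -Hactmu K2.
by rewrite Hactmu.
Qed.
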